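(* Let $I_3:=\bigcup_{i=0}^{3}L_i^{(9-i)}$ and $r:=\dot E/E+\tfrac{4}{3z}$, evaluated along solutions of the Boutroux–Painlevé system. For every $\epsilon>0$ there exists a neighbourhood $U$ of $I_3$ in $\mathcal S$ such that $|r|<\epsilon$ in $U$, for all $z\in\mathbb C\setminus\{0\}$. For every compact subset $K$ of $(L_4^{(5)}\setminus L_5^{(4)})\cup(L_7^{(2)}\setminus L_8^{(1)})$ there exist a neighbourhood $V$ of $K$ in $S_9$ and a constant $C>0$ such that $|3z\dot E/(4E)|\le C$ in $V$ for all $z\in\mathbb C\setminus\{0\}$.
   Context: Fix $\alpha\in\mathbb C$. Boutroux–Painlevé system: $\dot u=v-u^2-\tfrac12-\tfrac{u}{3z}$, $\dot v=2uv+\tfrac{2\alpha+1}{3z}-\tfrac{2v}{3z}$; energy $E=v^2/2-u^2v-v/2$, so that $\dot E=-\tfrac{4E}{3z}+\tfrac{4\alpha v-(2\alpha+1)(2u^2+1)}{6z}$, a rational function on the surface. Okamoto space: start from $\mathbb P^2(\mathbb C)$ with charts $(u,v)$, $(u_{01},v_{01})=(1/u,v/u)$, $(u_{02},v_{02})=(u/v,1/v)$; line at infinity $L_0$. Blowing up a point $(a,b)$ in a chart $(s,t)$ creates an exceptional line with charts $s=a+s_1t_1,\ t=b+t_1$ and $s=a+s_2,\ t=b+s_2t_2$. Nine blow-ups: $b_0:(u_{02},v_{02})=(0,0)\to L_1$; $b_1:(u_{12},v_{12})=(0,0)\to L_2$; $b_2:(u_{21},v_{21})=(1/2,0)\to L_3$;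 $b_3:(u_{31},v_{31})=(0,0)\to L_4$; $b_4:(u_{41},v_{41})=(-1/4,0)\to L_5$; $b_5:(u_{51},v_{51})=(\tfrac{1-2\alpha}{12z},0)\to L_6$; $b_6:(u_{01},v_{01})=(0,0)\to L_7$; $b_7:(u_{72},v_{72})=(0,0)\to L_8$; $b_8:(u_{82},v_{82})=(0,-\tfrac{1+2\alpha}{3z})\to L_9$, where blowing up produces charts $(u_{i1},v_{i1})$ (first type) and $(u_{i2},v_{i2})$ (second type) with $i$ the index of the new line. This gives $S_9(z)$; $L_i^{(9-i)}$ is the proper transform of $L_i$. $\mathcal S$ is the bundle of the surfaces $S_9(z)$ over $z\in\mathbb C\setminus\{0\}$. *)

(* Defs.v *)
From Stdlib Require Import Reals.

Record Cplx := mkC { Re : R ; Im : R }.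

Definition RC (x : R) : Cplx := mkC x 0%R.
Definition C0 : Cplx := RC 0%R.
Definition Cadd (x y : Cplx) : Cplx := mkC (Re x + Re y)%R (Im x + Im y)%R.
Definition Copp (x : Cplx) : Cplx := mkC (- Re x)%R (- Im x)%R.
Definition Csub (x y : Cplx) : Cplx := Cadd x (Copp y).
Definition Cmul (x y : Cplx) : Cplx :=
  mkC (Re x * Re y - Im x * Im y)%R (Re x * Im y + Im x * Re y)%R.
Definition Cinv (x : Cplx) : Cplx :=
  let d := (Re x * Re x + Im x * Im x)%R in mkC (Re x / d)%R (- Im x / d)%R.
Definition Cdiv (x y : Cplx) : Cplx := Cmul x (Cinv y).
Definition Cnorm (x : Cplx) : R := sqrt (Re x * Re x + Im x * Im x)%R.

Declare Scope C_scope.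
Delimit Scope C_scope with Cplx.
Bind Scope C_scope with Cplx.
Infix "+" := Cadd : C_scope.
Infix "-" := Csub : C_scope.
Infix "*" := Cmul : C_scope.
Infix "/" := Cdiv : C_scope.
Notation "- x" := (Copp x) : C_scope.

Section BP.
Variables (alpha z : Cplx).

Definition udot (u v : Cplx) : Cplx :=
  (v - u * u - RC (1/2) - u / (RC 3 * z))%Cplx.
Definition vdot (u v : Cplx) : Cplx :=
  (RC 2 * u * v + (RC 2 * alpha + RC 1) / (RC 3 * z) - RC 2 * v / (RC 3 * z))%Cplx.

Definition Eng (u v : Cplx) : Cplx := (v * v / RC 2 - u * u * v - v / RC 2)%Cplx.

(* E-dot along solutions: dE/du * u' + dE/dv * v'  (chain rule) *)
Definition Edot (u v : Cplx) : Cplx :=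
  ((- (RC 2 * u * v)) * udot u v + (v - u * u - RC (1/2)) * vdot u v)%Cplx.

Definition rfun (u v : Cplx) : Cplx := (Edot u v / Eng u v + RC 4 / (RC 3 * z))%Cplx.

Definition qfun (u v : Cplx) : Cplx := (RC 3 * z * Edot u v / (RC 4 * Eng u v))%Cplx.
End BP.

(* An affine point (u,v) of Cplx^2 is sent to a chart by composing the   *)
(* inverse blow-down maps; [cok] records that all denominators are     *)
(* nonzero, i.e. that the affine point lies in the domain of the chart.*)
Definition pt := (Cplx * Cplx)%type.
Record cpt := { cp : pt ; cok : Prop }.

(* blowing up (a,b) in chart (s,t):
   first chart   s = a + s1 t1, t = b + t1
   second chart  s = a + s2,    t = b + s2 t2 *)
Definition blow1 (a b : Cplx) (x : cpt) : cpt :=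
  {| cp := ((fst (cp x) - a) / (snd (cp x) - b), snd (cp x) - b)%Cplx ;
     cok := cok x /\ snd (cp x) <> b |}.
Definition blow2 (a b : Cplx) (x : cpt) : cpt :=
  {| cp := (fst (cp x) - a, (snd (cp x) - b) / (fst (cp x) - a))%Cplx ;
     cok := cok x /\ fst (cp x) <> a |}.

Inductive chart :=
  ch01 | ch02 | ch11 | ch12 | ch21 | ch22 | ch31 | ch32 | ch41 | ch42
| ch51 | ch52 | ch61 | ch62 | ch71 | ch72 | ch81 | ch82 | ch91 | ch92.

Section Charts.
Variables (alpha z : Cplx) (u v : Cplx).
Definition x01 : cpt := {| cp := (RC 1 / u, v / u)%Cplx ; cok := u <> C0 |}.
Definition x02 : cpt := {| cp := (u / v, RC 1 / v)%Cplx ; cok := v <> C0 |}.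
Definition x11 := blow1 C0 C0 x02.
Definition x12 := blow2 C0 C0 x02.
Definition x21 := blow1 C0 C0 x12.
Definition x22 := blow2 C0 C0 x12.
Definition x31 := blow1 (RC (1/2)) C0 x21.
Definition x32 := blow2 (RC (1/2)) C0 x21.
Definition x41 := blow1 C0 C0 x31.
Definition x42 := blow2 C0 C0 x31.
Definition x51 := blow1 (RC (-1/4)) C0 x41.
Definition x52 := blow2 (RC (-1/4)) C0 x41.
Definition b5a : Cplx := ((RC 1 - RC 2 * alpha) / (RC 12 * z))%Cplx.
Definition x61 := blow1 b5a C0 x51.
Definition x62 := blow2 b5a C0 x51.
Definition x71 := blow1 C0 C0 x01.
Definition x72 := blow2 C0 C0 x01.
Definition x81 := blow1 C0 C0 x72.
Definition x82 := blow2 C0 C0 x72.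
Definition b8b : Cplx := (- ((RC 1 + RC 2 * alpha) / (RC 3 * z)))%Cplx.
Definition x91 := blow1 C0 b8b x82.
Definition x92 := blow2 C0 b8b x82.

Definition chart_pt (c : chart) : cpt :=
  match c with
  | ch01 => x01 | ch02 => x02 | ch11 => x11 | ch12 => x12
  | ch21 => x21 | ch22 => x22 | ch31 => x31 | ch32 => x32
  | ch41 => x41 | ch42 => x42 | ch51 => x51 | ch52 => x52
  | ch61 => x61 | ch62 => x62 | ch71 => x71 | ch72 => x72
  | ch81 => x81 | ch82 => x82 | ch91 => x91 | ch92 => x92
  end.
End Charts.

Definition near (alpha : Cplx) (c : chart) (p : pt) (delta : R)
  (u v z : Cplx) : Prop :=
  let x := chart_pt alpha z u v c in
  cok x /\
  (Cnorm (fst (cp x) - fst p)%Cplx < delta)%R /\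
  (Cnorm (snd (cp x) - snd p)%Cplx < delta)%R.

(* Points of the proper transforms, as (chart, chart coordinates).     *)
(* Points blown up later are excluded; their replacements (the         *)
(* intersection points with later exceptional lines) are added.        *)
Definition half : Cplx := RC (1/2).

(* L_0^{(9)} : u01 = 0 (v01 <> 0, the point v01 = 0 being blown up by b6);
   the point [0:1:0] (blown up by b0) is replaced by L_0 /\ L_2 = (u22,v22)=(0,0);
   the point [1:0:0] (blown up by b6) is replaced by L_0 /\ L_7 = (u71,v71)=(0,0). *)
Definition on_L0 (c : chart) (p : pt) : Prop :=
  (c = ch01 /\ fst p = C0 /\ snd p <> C0) \/
  (c = ch71 /\ p = (C0, C0)) \/
  (c = ch22 /\ p = (C0, C0)).

(* L_1^{(8)} : v11 = 0 (all of L_1 but the b1 centre), plus L_1 /\ L_2 = (u21,v21)=(0,0) *)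
Definition on_L1 (c : chart) (p : pt) : Prop :=
  (c = ch11 /\ snd p = C0) \/
  (c = ch21 /\ p = (C0, C0)).

(* L_2^{(7)} : v21 = 0, u21 <> 1/2 ; the point u21 = oo, i.e. (u22,v22)=(0,0);
   plus L_2 /\ L_3 = (u32,v32) = (0,0) *)
Definition on_L2 (c : chart) (p : pt) : Prop :=
  (c = ch21 /\ snd p = C0 /\ fst p <> half) \/
  (c = ch22 /\ p = (C0, C0)) \/
  (c = ch32 /\ p = (C0, C0)).

(* L_3^{(6)} : v31 = 0, u31 <> 0 ; the point u31 = oo, i.e. (u32,v32)=(0,0);
   plus L_3 /\ L_4 = (u42,v42) = (0,0) *)
Definition on_L3 (c : chart) (p : pt) : Prop :=
  (c = ch31 /\ snd p = C0 /\ fst p <> C0) \/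
  (c = ch32 /\ p = (C0, C0)) \/
  (c = ch42 /\ p = (C0, C0)).

Definition on_I3 (c : chart) (p : pt) : Prop :=
  on_L0 c p \/ on_L1 c p \/ on_L2 c p \/ on_L3 c p.

(* L_4^{(5)} \ L_5^{(4)} = L_4 minus the b4 centre (u41 = -1/4), parametrised
   homeomorphically by w in Cplx:  w <> 0  |->  u41 = -1/4 + 1/w  (v41 = 0),
   w = 0  |->  u41 = oo, i.e. (u42,v42) = (0,0). *)
Definition L4pt (w : Cplx) (c : chart) (p : pt) : Prop :=
  (w <> C0 /\ c = ch41 /\ p = ((RC (-1/4) + RC 1 / w)%Cplx, C0)) \/
  (w = C0 /\ c = ch42 /\ p = (C0, C0)).

(* L_7^{(2)} \ L_8^{(1)} = L_7 minus u71 = oo, parametrised by m = u71 (v71 = 0). *)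
Definition L7pt (m : Cplx) (c : chart) (p : pt) : Prop :=
  c = ch71 /\ p = (m, C0).

Definition Copen (U : Cplx -> Prop) : Prop :=
  forall x, U x -> exists d : R, (0 < d)%R /\
    forall y, (Cnorm (y - x)%Cplx < d)%R -> U y.
Definition Ccompact (K : Cplx -> Prop) : Prop :=
  forall (I : Type) (F : I -> Cplx -> Prop),
    (forall i, Copen (F i)) ->
    (forall x, K x -> exists i, F i x) ->
    exists l : list I, forall x, K x -> exists i, List.In i l /\ F i x.

(* Main.v *)
From Coquelicot Require Complex.
Require Import Defs.
From Stdlib Require Import Reals Lra Psatz Field.
Open Scope R_scope.
Definition toC (x : Cplx) : Complex.C := (Re x, Im x).
Lemma Cnorm_toC x : Cnorm x = Complex.Cmod (toC x).
Proof. unfold Cnorm, Complex.Cmod, toC; simpl. f_equal. ring. Qed.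
Lemma Cnorm_ge0 x : 0 <= Cnorm x.
Proof. rewrite Cnorm_toC. apply Complex.Cmod_ge_0. Qed.
Lemma Cnorm_add x y : Cnorm (Cadd x y) <= Cnorm x + Cnorm y.
Proof. rewrite !Cnorm_toC. apply (Complex.Cmod_triangle (toC x) (toC y)). Qed.
Lemma Cnorm_mul x y : Cnorm (Cmul x y) = Cnorm x * Cnorm y.
Proof. rewrite !Cnorm_toC. apply (Complex.Cmod_mult (toC x) (toC y)). Qed.
Lemma Cnorm_opp x : Cnorm (Copp x) = Cnorm x.
Proof. unfold Cnorm, Copp; simpl. f_equal. ring. Qed.
Lemma Cnorm_eq0 x : Cnorm x = 0 -> x = C0.
Proof. rewrite Cnorm_toC. intro H. apply Complex.Cmod_eq_0 in H. unfold toC in H.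
 destruct x; simpl in *. injection H; intros; subst; reflexivity. Qed.
Lemma Cnorm_RC r : Cnorm (RC r) = Rabs r.
Proof. unfold Cnorm, RC; simpl. rewrite Rmult_0_l, Rplus_0_r. apply sqrt_Rsqr_abs. Qed.

Lemma Ceq (x y : Cplx) : Re x = Re y -> Im x = Im y -> x = y.
Proof. destruct x, y; simpl; intros; subst; reflexivity. Qed.
Definition C1 := RC 1.
Lemma Cring : ring_theory C0 C1 Cadd Cmul Csub Copp (@eq Cplx).
Proof. constructor; intros; apply Ceq; unfold C0,C1,RC,Cadd,Cmul,Csub,Copp; simpl; ring. Qed.
Lemma Cnz (x : Cplx) : x <> C0 -> Re x * Re x + Im x * Im x <> 0.
Proof. intros H E. apply H. destruct x as [a b]; simpl in *. unfold C0, RC.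
 assert (a = 0) by nra. assert (b=0) by nra. subst; reflexivity. Qed.
Lemma Cfield : field_theory C0 C1 Cadd Cmul Csub Copp Cdiv Cinv (@eq Cplx).
Proof. constructor.
 - exact Cring.
 - intro H. unfold C1, C0, RC in H. injection H. lra.
 - reflexivity.
 - intros p Hp. apply Cnz in Hp. apply Ceq; unfold Cinv, Cmul, C1, RC; simpl; field; auto.
Qed.
Add Field Cfld : Cfield.
Open Scope C_scope.

Lemma RC_add (a b : R) : RC (a + b) = RC a + RC b.
Proof. apply Ceq; unfold RC, Cadd; simpl; ring. Qed.
Lemma RC_mul (a b : R) : RC (a * b) = RC a * RC b.
Proof. apply Ceq; unfold RC, Cmul; simpl; ring. Qed.
Lemma RC_opp (a : R) : RC (- a) = - RC a.
Proof. apply Ceq; unfold RC, Copp; simpl; ring. Qed.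
Lemma RC_inv (a : R) : a <> 0%R -> RC (/ a) = C1 / RC a.
Proof. intro. apply Ceq; unfold RC, Cdiv, Cmul, Cinv, C1; simpl; field; auto. Qed.
Lemma RC_neq (a : R) : a <> 0%R -> RC a <> C0.
Proof. intros H E; apply H; injection E; auto. Qed.
Notation C2 := (C1 + C1).
Lemma RC2 : RC 2 = C2. Proof. apply Ceq; unfold C1, RC, Cadd; simpl; ring. Qed.
Lemma RC3 : RC 3 = C2 + C1. Proof. apply Ceq; unfold C1, RC, Cadd; simpl; ring. Qed.
Lemma RC4 : RC 4 = C2 * C2. Proof. apply Ceq; unfold C1, RC, Cadd, Cmul; simpl; ring. Qed.
Lemma RC12 : RC 12 = (C2 + C1) * C2 * C2. Proof. apply Ceq; unfold C1, RC, Cadd, Cmul; simpl; ring. Qed.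
Lemma RChalf : RC (1/2) = C1 / C2.
Proof. apply Ceq; unfold C1, RC, Cadd, Cmul, Cdiv, Cinv; simpl; field. Qed.
Lemma C1nz : C1 <> C0. Proof. unfold C1, C0, RC; intro H; injection H; intros; lra. Qed.
Lemma C2nz : C2 <> C0. Proof. unfold C1, C0, RC, Cadd; intro H; injection H; simpl; intros; lra. Qed.
Lemma C3nz : C2 + C1 <> C0. Proof. unfold C1, C0, RC, Cadd; intro H; injection H; simpl; intros; lra. Qed.
Ltac cnum := rewrite ?RC2, ?RC3, ?RC4, ?RC12, ?RChalf in *; fold C1 in *.
Ltac cside := repeat split; try exact C2nz; try exact C3nz; auto.

Definition Nf (alpha u v : Cplx) : Cplx :=
  RC 4 * alpha * v - (RC 2 * alpha + RC 1) * (RC 2 * u * u + RC 1).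


Ltac cnz := let H := fresh in intro H; injection H; intros; lra.
Ltac cside ::= repeat split; try cnz; auto.

Lemma Edot_eq alpha z u v : z <> C0 ->
  Edot alpha z u v = - (C2 * C2) * Eng u v / ((C2 + C1) * z) + Nf alpha u v / (C2 * (C2+C1) * z).
Proof. intros Hz. unfold Edot, udot, vdot, Nf, Eng. cnum. field. cside. Qed.

Lemma rfun_eq alpha z u v : z <> C0 -> Eng u v <> C0 ->
  rfun alpha z u v = Nf alpha u v / Eng u v / (C2 * (C2 + C1) * z).
Proof. intros Hz HE. unfold rfun. rewrite Edot_eq by auto.
 generalize (Nf alpha u v) (Eng u v) HE. intros n e He. cnum. field. cside. Qed.

Lemma qfun_eq alpha z u v : z <> C0 -> Eng u v <> C0 ->
  qfun alpha z u v = Nf alpha u v / Eng u v / (C2 * C2 * C2) - C1.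
Proof. intros Hz HE. unfold qfun. rewrite Edot_eq by auto.
 generalize (Nf alpha u v) (Eng u v) HE. intros n e He. cnum. field. cside. Qed.

Lemma blow1_inv a b x X Y : cp (blow1 a b x) = (X,Y) -> cok (blow1 a b x) ->
  cp x = (a + X*Y, b + Y) /\ cok x /\ Y <> C0.
Proof. destruct x as [[s t] ok]; simpl. intros H [Hok Ht]. injection H; intros; subst.
 assert (t - b <> C0). { intro E. apply Ht. transitivity (t - b + b). ring. rewrite E. ring. }
 repeat split; auto; f_equal; field; auto. Qed.
Lemma blow2_inv a b x X Y : cp (blow2 a b x) = (X,Y) -> cok (blow2 a b x) ->
  cp x = (a + X, b + X*Y) /\ cok x /\ X <> C0.
Proof. destruct x as [[s t] ok]; simpl. intros H [Hok Ht]. injection H; intros; subst.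
 assert (s - a <> C0). { intro E. apply Ht. transitivity (s - a + a). ring. rewrite E. ring. }
 repeat split; auto; f_equal; field; auto. Qed.
Lemma x02_inv u v X Y : cp (x02 u v) = (X,Y) -> cok (x02 u v) ->
  u = X / Y /\ v = C1 / Y /\ Y <> C0.
Proof. simpl. intros H Hv. injection H; intros; subst. fold C1.
 assert (C1 / v <> C0). { intro E. apply C1nz. transitivity (C1 / v * v). field; auto. rewrite E; ring. }
 repeat split; auto; field; cside. Qed.
Lemma x01_inv u v X Y : cp (x01 u v) = (X,Y) -> cok (x01 u v) ->
  u = C1 / X /\ v = Y / X /\ X <> C0.
Proof. simpl. intros H Hv. injection H; intros; subst. fold C1.
 assert (C1 / u <> C0). { intro E. apply C1nz. transitivity (C1 / u * u). field; auto. rewrite E; ring. }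
 repeat split; auto; field; cside. Qed.

Ltac peel :=
  repeat match goal with
  | H : cp (blow1 ?a ?b ?x) = _, H' : cok (blow1 ?a ?b ?x) |- _ =>
      let Hc := fresh "Hc" in let Ho := fresh "Ho" in let Hn := fresh "Hn" in
      destruct (blow1_inv a b x _ _ H H') as [Hc [Ho Hn]]; clear H H'
  | H : cp (blow2 ?a ?b ?x) = _, H' : cok (blow2 ?a ?b ?x) |- _ =>
      let Hc := fresh "Hc" in let Ho := fresh "Ho" in let Hn := fresh "Hn" in
      destruct (blow2_inv a b x _ _ H H') as [Hc [Ho Hn]]; clear H H'
  | H : cp (x02 ?u ?v) = _, H' : cok (x02 ?u ?v) |- _ =>
      let Hu := fresh "Hu" in let Hv := fresh "Hv" in let Hn := fresh "Hn" in
      destruct (x02_inv u v _ _ H H') as [Hu [Hv Hn]]; clear H H'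
  | H : cp (x01 ?u ?v) = _, H' : cok (x01 ?u ?v) |- _ =>
      let Hu := fresh "Hu" in let Hv := fresh "Hv" in let Hn := fresh "Hn" in
      destruct (x01_inv u v _ _ H H') as [Hu [Hv Hn]]; clear H H'
  end.

Lemma Cadd0l x : C0 + x = x. Proof. ring. Qed.


Lemma ratio e n P Q M : e = Q*M -> n = P*M -> e <> C0 -> n / e = P / Q.
Proof. intros -> -> He. assert (HQ : Q <> C0) by (intro H; apply He; rewrite H; ring).
 assert (HM : M <> C0) by (intro H; apply He; rewrite H; ring). field; auto. Qed.

Definition Kf alpha A b := C2*C2*alpha - (C2*alpha+C1)*A*(C2 + b*b).

Definition P01 alpha X Y := C2*X*(C2*C2*alpha*Y*X - (C2*alpha+C1)*(C2+X*X)).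
Definition Q01 (X Y : Cplx) := Y*(Y*X - C2 - X*X).
Lemma G01 alpha u v X Y : cp (x01 u v) = (X,Y) -> cok (x01 u v) -> Eng u v <> C0 ->
  Nf alpha u v / Eng u v = P01 alpha X Y / Q01 X Y.
Proof. intros Hc0 Hok HE. peel. cnum. unfold P01, Q01.
 apply ratio with (M := C1/(C2*X*X*X)); auto.
 - rewrite Hu, Hv. unfold Eng. cnum. field. cside.
 - rewrite Hu, Hv. unfold Nf. cnum. field. cside.
Qed.

Definition P71 alpha X Y := C2*X*(C2*C2*alpha*X*Y*Y - (C2*alpha+C1)*(C2+X*X*Y*Y)).
Definition Q71 (X Y : Cplx) := X*Y*Y - C2 - X*X*Y*Y.
Lemma G71 alpha u v X Y : cp (x71 u v) = (X,Y) -> cok (x71 u v) -> Eng u v <> C0 ->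
  Nf alpha u v / Eng u v = P71 alpha X Y / Q71 X Y.
Proof. intros Hc0 Hok HE. unfold x71 in *. peel. rewrite ?Cadd0l in *. cnum. unfold P71, Q71.
 assert (HX : X <> C0) by (intro H0; apply Hn0; rewrite H0; ring).
 apply ratio with (M := C1/(C2*X*X*X*Y*Y)); auto.
 - rewrite Hu, Hv. unfold Eng. cnum. field. cside.
 - rewrite Hu, Hv. unfold Nf. cnum. field. cside.
Qed.

Definition P11 alpha X Y := C2*Y*(C2*C2*alpha - (C2*alpha+C1)*(C2*X*X*Y + Y)).
Definition Q11 (X Y : Cplx) := C1 - C2*X*X*Y - Y.
Lemma G11 alpha u v X Y : cp (x11 u v) = (X,Y) -> cok (x11 u v) -> Eng u v <> C0 ->
  Nf alpha u v / Eng u v = P11 alpha X Y / Q11 X Y.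
Proof. intros Hc0 Hok HE. unfold x11 in *. peel. rewrite ?Cadd0l in *. cnum. unfold P11, Q11.
 apply ratio with (M := C1/(C2*Y*Y)); auto.
 - rewrite Hu, Hv. unfold Eng. cnum. field. cside.
 - rewrite Hu, Hv. unfold Nf. cnum. field. cside.
Qed.

Definition P21 alpha X Y := C2*X*Y*Y*Kf alpha X Y.
Definition Q21 (X Y : Cplx) := C1 - C2*X - X*Y*Y.
Lemma G21 alpha u v X Y : cp (x21 u v) = (X,Y) -> cok (x21 u v) -> Eng u v <> C0 ->
  Nf alpha u v / Eng u v = P21 alpha X Y / Q21 X Y.
Proof. intros Hc0 Hok HE. unfold x21, x12 in *. peel. rewrite ?Cadd0l in *. cnum. unfold P21, Q21.
 assert (HX : X <> C0) by (intro H0; apply Hn0; rewrite H0; ring).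
 apply ratio with (M := C1/(C2*X*X*Y*Y*Y*Y)); auto.
 - rewrite Hu, Hv. unfold Eng. cnum. field. cside.
 - rewrite Hu, Hv. unfold Nf, Kf. cnum. field. cside.
Qed.

Definition P22 alpha X Y := C2*X*X*Y*(C2*C2*alpha*Y - (C2*alpha+C1)*(C2+X*X*Y*Y)).
Definition Q22 (X Y : Cplx) := Y - C2 - X*X*Y*Y.
Lemma G22 alpha u v X Y : cp (x22 u v) = (X,Y) -> cok (x22 u v) -> Eng u v <> C0 ->
  Nf alpha u v / Eng u v = P22 alpha X Y / Q22 X Y.
Proof. intros Hc0 Hok HE. unfold x22, x12 in *. peel. rewrite ?Cadd0l in *. cnum. unfold P22, Q22.
 assert (HY : Y <> C0) by (intro H0; apply Hn1; rewrite H0; ring).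
 apply ratio with (M := C1/(C2*X*X*X*X*Y*Y*Y)); auto.
 - rewrite Hu, Hv. unfold Eng. cnum. field. cside.
 - rewrite Hu, Hv. unfold Nf. cnum. field. cside.
Qed.

Definition A31 (X Y : Cplx) := C1/C2 + X*Y.
Definition P31 alpha X Y := C2 * A31 X Y * Y * Kf alpha (A31 X Y) Y.
Definition Q31 X Y := - (C2*X) - A31 X Y * Y.
Lemma G31 alpha u v X Y : cp (x31 u v) = (X,Y) -> cok (x31 u v) -> Eng u v <> C0 ->
  Nf alpha u v / Eng u v = P31 alpha X Y / Q31 X Y.
Proof. intros Hc0 Hok HE. unfold x31, x21, x12 in *. peel. rewrite ?Cadd0l in *. cnum.
 destruct (ex_intro (fun A => A = C1/C2 + X*Y) _ eq_refl) as [A HA].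
 rewrite <- HA in *.
 unfold P31, Q31, A31. rewrite <- HA.
 assert (HA0 : A <> C0) by (intro H0; apply Hn1; rewrite H0; ring).
 apply ratio with (M := C1/(C2*A*A*Y*Y*Y)); auto.
 - rewrite Hu, Hv. unfold Eng. cnum.
   transitivity ((C1 - C2*A - A*Y*Y)/(C2*A*A*Y*Y*Y*Y)). field; cside.
   replace (C1 - C2*A) with (-(C2*(X*Y))) by (rewrite HA; field; cside). field; cside.
 - rewrite Hu, Hv. unfold Nf, Kf. cnum. field. cside.
Qed.

Definition A32 (X Y : Cplx) := C1/C2 + X.
Definition P32 alpha X Y := C2 * A32 X Y * X * Y * Y * Kf alpha (A32 X Y) (X*Y).
Definition Q32 X Y := - C2 - A32 X Y * X * Y * Y.
Lemma G32 alpha u v X Y : cp (x32 u v) = (X,Y) -> cok (x32 u v) -> Eng u v <> C0 ->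
  Nf alpha u v / Eng u v = P32 alpha X Y / Q32 X Y.
Proof. intros Hc0 Hok HE. unfold x32, x21, x12 in *. peel. rewrite ?Cadd0l in *. cnum.
 destruct (ex_intro (fun A => A = C1/C2 + X) _ eq_refl) as [A HA].
 rewrite <- HA in *.
 unfold P32, Q32, A32. rewrite <- HA.
 assert (HA0 : A <> C0) by (intro H0; apply Hn1; rewrite H0; ring).
 assert (HY : Y <> C0) by (intro H0; apply Hn0; rewrite H0; ring).
 apply ratio with (M := C1/(C2*A*A*X*X*X*Y*Y*Y*Y)); auto.
 - rewrite Hu, Hv. unfold Eng. cnum.
   transitivity ((C1 - C2*A - A*(X*Y)*(X*Y))/(C2*A*A*(X*Y)*(X*Y)*(X*Y)*(X*Y))). field; cside.
   replace (C1 - C2*A) with (-(C2*X)) by (rewrite HA; field; cside). field; cside.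
 - rewrite Hu, Hv. unfold Nf, Kf. cnum. field. cside.
Qed.

Definition A41 (X Y : Cplx) := C1/C2 + X*Y*Y.
Definition P41 alpha X Y := C2 * A41 X Y * Kf alpha (A41 X Y) Y.
Definition Q41 X Y := - (C2*X) - A41 X Y.
Lemma G41 alpha u v X Y : cp (x41 u v) = (X,Y) -> cok (x41 u v) -> Eng u v <> C0 ->
  Nf alpha u v / Eng u v = P41 alpha X Y / Q41 X Y.
Proof. intros Hc0 Hok HE. unfold x41, x31, x21, x12 in *. peel. rewrite ?Cadd0l in *. cnum.
 destruct (ex_intro (fun A => A = C1/C2 + X*Y*Y) _ eq_refl) as [A HA].
 rewrite <- HA in *.
 unfold P41, Q41, A41. rewrite <- HA.
 assert (HA0 : A <> C0) by (intro H0; apply Hn2; rewrite H0; ring).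
 apply ratio with (M := C1/(C2*A*A*Y*Y)); auto.
 - rewrite Hu, Hv. unfold Eng. cnum.
   transitivity ((C1 - C2*A - A*Y*Y)/(C2*A*A*Y*Y*Y*Y)). field; cside.
   replace (C1 - C2*A) with (-(C2*(X*Y*Y))) by (rewrite HA; field; cside). field; cside.
 - rewrite Hu, Hv. unfold Nf, Kf. cnum. field. cside.
Qed.

Definition A42 X Y := C1/C2 + X*X*Y.
Definition P42 alpha X Y := C2 * A42 X Y * Y * Kf alpha (A42 X Y) (X*Y).
Definition Q42 X Y := - C2 - A42 X Y * Y.


Lemma G42 alpha u v X Y : cp (x42 u v) = (X,Y) -> cok (x42 u v) -> Eng u v <> C0 ->
  Nf alpha u v / Eng u v = P42 alpha X Y / Q42 X Y.
Proof. intros Hc0 Hok HE. unfold x42, x31, x21, x12 in *. peel. rewrite ?Cadd0l in *. cnum.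
 destruct (ex_intro (fun A => A = C1/C2 + X*X*Y) _ eq_refl) as [A HA].
 assert (HA' : X*X*Y = A - C1/C2) by (rewrite HA; field; cside).
 assert (HA2 : C1/C2 + X*(X*Y) = A) by (rewrite HA; ring).
 rewrite HA2 in *.
 unfold P42, Q42, A42. rewrite <- HA.
 assert (HA0 : A <> C0) by (intro H0; apply Hn2; rewrite H0; ring).
 assert (HY : Y <> C0) by (intro H0; apply Hn0; rewrite H0; ring).
 apply ratio with (M := C1/(C2*A*A*X*X*Y*Y*Y)); auto.
 - rewrite Hu, Hv. unfold Eng. cnum.
   transitivity ((C1 - C2*A - A*(X*X*Y)*Y)/(C2*A*A*X*X*X*X*Y*Y*Y*Y)). field; cside.
   replace (C1 - C2*A) with (-(C2*(X*X*Y))) by (rewrite HA; field; cside). field; cside.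
 - rewrite Hu, Hv. unfold Nf, Kf. cnum. field. cside.
Qed.

Lemma C1inv x : x <> C0 -> (Cnorm (Cinv x) * Cnorm x = 1)%R.
Proof. intro H. rewrite <- Cnorm_mul. replace (Cinv x * x) with C1 by (field; auto).
 unfold C1. rewrite Cnorm_RC. apply Rabs_R1. Qed.
Lemma Cnorm_pos x : x <> C0 -> (0 < Cnorm x)%R.
Proof. intro H. destruct (Cnorm_ge0 x) as [h|h]; auto. exfalso; apply H, Cnorm_eq0; auto. Qed.
Lemma Cnorm_sub_tri x y : (Cnorm x <= Cnorm y + Cnorm (x - y))%R.
Proof. replace x with (y + (x - y)) at 1 by ring. apply Cnorm_add. Qed.
Lemma Cnorm_sub_sym x y : Cnorm (x - y) = Cnorm (y - x).
Proof. replace (x - y) with (- (y - x)) by ring. apply Cnorm_opp. Qed.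

Definition cont (f : Cplx -> Cplx -> Cplx) (X0 Y0 : Cplx) : Prop :=
  forall eps : R, (0 < eps)%R -> exists d : R, (0 < d)%R /\
    forall X Y, (Cnorm (X - X0) < d)%R -> (Cnorm (Y - Y0) < d)%R ->
      (Cnorm (f X Y - f X0 Y0) < eps)%R.

Lemma cont_const c X0 Y0 : cont (fun _ _ => c) X0 Y0.
Proof. intros eps He. exists 1%R. split; [lra|]. intros. replace (c - c) with C0 by ring.
 unfold C0; rewrite Cnorm_RC, Rabs_R0; auto. Qed.
Lemma cont_X X0 Y0 : cont (fun X _ => X) X0 Y0.
Proof. intros eps He. exists eps. split; auto. Qed.
Lemma cont_Y X0 Y0 : cont (fun _ Y => Y) X0 Y0.
Proof. intros eps He. exists eps. split; auto. Qed.
Lemma cont_add f g X0 Y0 : cont f X0 Y0 -> cont g X0 Y0 -> cont (fun X Y => f X Y + g X Y) X0 Y0.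
Proof. intros Hf Hg eps He.
 destruct (Hf (eps/2)%R) as [d1 [Hd1 H1]]; [lra|]. destruct (Hg (eps/2)%R) as [d2 [Hd2 H2]]; [lra|].
 exists (Rmin d1 d2). split; [apply Rmin_pos; auto|]. intros X Y HX HY.
 assert (A1 := Rmin_l d1 d2). assert (A2 := Rmin_r d1 d2).
 replace (f X Y + g X Y - (f X0 Y0 + g X0 Y0)) with ((f X Y - f X0 Y0) + (g X Y - g X0 Y0)) by ring.
 eapply Rle_lt_trans; [apply Cnorm_add|].
 assert (B1 := H1 X Y ltac:(lra) ltac:(lra)). assert (B2 := H2 X Y ltac:(lra) ltac:(lra)). lra. Qed.
Lemma cont_opp f X0 Y0 : cont f X0 Y0 -> cont (fun X Y => - f X Y) X0 Y0.
Proof. intros Hf eps He. destruct (Hf eps He) as [d [Hd H]]. exists d. split; auto.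
 intros X Y HX HY. replace (- f X Y - - f X0 Y0) with (- (f X Y - f X0 Y0)) by ring.
 rewrite Cnorm_opp. auto. Qed.
Lemma cont_sub f g X0 Y0 : cont f X0 Y0 -> cont g X0 Y0 -> cont (fun X Y => f X Y - g X Y) X0 Y0.
Proof. intros. apply (cont_add f (fun X Y => - g X Y)); auto. apply cont_opp; auto. Qed.
Lemma cont_mul f g X0 Y0 : cont f X0 Y0 -> cont g X0 Y0 -> cont (fun X Y => f X Y * g X Y) X0 Y0.
Proof. intros Hf Hg eps He.
 set (F := Cnorm (f X0 Y0)). set (G := Cnorm (g X0 Y0)).
 assert (HF := Cnorm_ge0 (f X0 Y0)). assert (HG := Cnorm_ge0 (g X0 Y0)). fold F G in HF, HG.
 set (e := Rmin 1 (eps / (1 + F + G))).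
 assert (He0 : (0 < e)%R). { apply Rmin_pos; [lra|]. apply Rdiv_lt_0_compat; lra. }
 assert (He1 : (e <= 1)%R) by apply Rmin_l.
 assert (He2 : (e * (1 + F + G) <= eps)%R).
 { assert (e <= eps / (1+F+G))%R by apply Rmin_r.
   apply Rmult_le_compat_r with (r := (1+F+G)%R) in H; [|lra].
   unfold Rdiv in H. rewrite Rmult_assoc, Rinv_l, Rmult_1_r in H; lra. }
 destruct (Hf e He0) as [d1 [Hd1 H1]]. destruct (Hg e He0) as [d2 [Hd2 H2]].
 exists (Rmin d1 d2). split; [apply Rmin_pos; auto|]. intros X Y HX HY.
 assert (A1 := Rmin_l d1 d2). assert (A2 := Rmin_r d1 d2).
 assert (B1 := H1 X Y ltac:(lra) ltac:(lra)). assert (B2 := H2 X Y ltac:(lra) ltac:(lra)).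
 replace (f X Y * g X Y - f X0 Y0 * g X0 Y0) with
   ((f X Y - f X0 Y0) * (g X Y - g X0 Y0) + ((f X Y - f X0 Y0) * g X0 Y0 + f X0 Y0 * (g X Y - g X0 Y0))) by ring.
 eapply Rle_lt_trans; [apply Cnorm_add|]. rewrite Cnorm_mul.
 eapply Rle_lt_trans; [apply Rplus_le_compat_l; apply Cnorm_add|]. rewrite !Cnorm_mul. fold F G.
 set (a := Cnorm (f X Y - f X0 Y0)) in *. set (b := Cnorm (g X Y - g X0 Y0)) in *.
 assert (0 <= a)%R by apply Cnorm_ge0. assert (0 <= b)%R by apply Cnorm_ge0.
 nra. Qed.
Lemma cont_inv f X0 Y0 : cont f X0 Y0 -> f X0 Y0 <> C0 -> cont (fun X Y => Cinv (f X Y)) X0 Y0.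
Proof. intros Hf Hnz eps He.
 set (F := Cnorm (f X0 Y0)). assert (HF : (0 < F)%R) by (apply Cnorm_pos; auto).
 set (e := Rmin (F/2) (eps * F * F / 2)).
 assert (He0 : (0 < e)%R). { apply Rmin_pos; [lra|]. apply Rdiv_lt_0_compat; [|lra]. repeat apply Rmult_lt_0_compat; lra. }
 assert (He1 : (e <= F/2)%R) by apply Rmin_l. assert (He2 : (e <= eps*F*F/2)%R) by apply Rmin_r.
 destruct (Hf e He0) as [d [Hd H]]. exists d. split; auto. intros X Y HX HY.
 assert (B := H X Y HX HY). set (a := Cnorm (f X Y - f X0 Y0)) in *.
 assert (T := Cnorm_sub_tri (f X0 Y0) (f X Y)). rewrite Cnorm_sub_sym in T. fold a F in T.
 assert (Hfx : f X Y <> C0). { intro E. rewrite E in T. unfold C0 in T. rewrite Cnorm_RC, Rabs_R0 in T. lra. }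
 replace (Cinv (f X Y) - Cinv (f X0 Y0)) with ((f X0 Y0 - f X Y) * Cinv (f X Y) * Cinv (f X0 Y0)) by (field; auto).
 rewrite !Cnorm_mul. rewrite Cnorm_sub_sym. fold a.
 assert (I1 := C1inv _ Hfx). assert (I2 := C1inv _ Hnz). fold F in I2.
 set (g := Cnorm (f X Y)) in *. set (i1 := Cnorm (Cinv (f X Y))) in *. set (i2 := Cnorm (Cinv (f X0 Y0))) in *.
 assert (0 <= a)%R by apply Cnorm_ge0.
 assert (Hi2 : i2 = / F) by (field_simplify_eq; [lra| lra]).
 assert (Hg : (F/2 < g)%R) by lra.
 assert (Hi1 : i1 = / g) by (field_simplify_eq; [lra | lra]).
 rewrite Hi1, Hi2. apply Rmult_lt_reg_r with (r := (g * F)%R). nra.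
 field_simplify; try lra. assert (0 < F*eps)%R by nra. nra. Qed.
Lemma cont_div f g X0 Y0 : cont f X0 Y0 -> cont g X0 Y0 -> g X0 Y0 <> C0 -> cont (fun X Y => f X Y / g X Y) X0 Y0.
Proof. intros. apply (cont_mul f (fun X Y => Cinv (g X Y))); auto. apply cont_inv; auto. Qed.

Ltac contt := repeat first [ apply cont_const | apply cont_X | apply cont_Y | apply cont_div | apply cont_add | apply cont_sub
  | apply cont_mul | apply cont_opp ].

Lemma RCm14 : RC (-1/4) = - (C1 / (C2 * C2)).
Proof. apply Ceq; unfold C1, RC, Cadd, Cmul, Cdiv, Cinv, Copp; simpl; field. Qed.
Lemma RC1' : RC 1 = C1. Proof. reflexivity. Qed.
Ltac cnum2 := rewrite ?RCm14 in *; cnum.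

Lemma mul_nz x y : x <> C0 -> y <> C0 -> x * y <> C0.
Proof. intros Hx Hy H. apply Hy. transitivity (Cinv x * (x * y)). field; auto. rewrite H; ring. Qed.
Lemma sub_nz x y : x <> y -> x - y <> C0.
Proof. intros H E. apply H. transitivity (x - y + y). ring. rewrite E; ring. Qed.
Lemma inv_nz x : x <> C0 -> Cinv x <> C0.
Proof. intros H E. apply C1nz. transitivity (Cinv x * x). field; auto. rewrite E; ring. Qed.
Lemma opp_nz x : x <> C0 -> - x <> C0.
Proof. intros H E. apply H. transitivity (- - x). ring. rewrite E; ring. Qed.
Lemma div0 q : C0 / q = C0. Proof. unfold Cdiv. ring. Qed.
Lemma Cnorm_C0 : Cnorm C0 = 0%R. Proof. unfold C0. rewrite Cnorm_RC. apply Rabs_R0. Qed.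
Lemma Cnorm_C6 : Cnorm (C2 * (C2 + C1)) = 6%R.
Proof. replace (C2 * (C2 + C1)) with (RC 6). rewrite Cnorm_RC. apply Rabs_pos_eq; lra.
 apply Ceq; unfold C1, RC, Cadd, Cmul; simpl; ring. Qed.
Lemma Cnorm_C8 : Cnorm (C2 * C2 * C2) = 8%R.
Proof. replace (C2 * C2 * C2) with (RC 8). rewrite Cnorm_RC. apply Rabs_pos_eq; lra.
 apply Ceq; unfold C1, RC, Cadd, Cmul; simpl; ring. Qed.
Lemma Cnorm_C2 : Cnorm C2 = 2%R.
Proof. replace C2 with (RC 2). rewrite Cnorm_RC. apply Rabs_pos_eq; lra.
 apply Ceq; unfold C1, RC, Cadd, Cmul; simpl; ring. Qed.
Lemma Cnorm_inv x : x <> C0 -> Cnorm (Cinv x) = (/ Cnorm x)%R.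
Proof. intro H. assert (I := C1inv x H). assert (P := Cnorm_pos x H).
 apply (Rmult_eq_reg_r (Cnorm x)); [|lra]. rewrite I. field. lra. Qed.
Lemma C6nz : C2 * (C2 + C1) <> C0.
Proof. intro H. assert (E := Cnorm_C6). rewrite H, Cnorm_C0 in E. lra. Qed.
Lemma C8nz : C2 * C2 * C2 <> C0.
Proof. intro H. assert (E := Cnorm_C8). rewrite H, Cnorm_C0 in E. lra. Qed.

Lemma part1_gen alpha c (P Q : Cplx -> Cplx -> Cplx) X0 Y0 eps z0 :
 (forall z u v X Y, cp (chart_pt alpha z u v c) = (X,Y) -> cok (chart_pt alpha z u v c) ->
    Eng u v <> C0 -> Nf alpha u v / Eng u v = P X Y / Q X Y) ->
 cont (fun X Y => P X Y / Q X Y) X0 Y0 -> P X0 Y0 / Q X0 Y0 = C0 -> (0<eps)%R -> z0 <> C0 ->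
 exists delta, (0<delta)%R /\ forall u v z, z<>C0 -> Eng u v <> C0 -> (Cnorm (z - z0) < delta)%R ->
   near alpha c (X0,Y0) delta u v z -> (Cnorm (rfun alpha z u v) < eps)%R.
Proof. intros Hid Hc H0 Heps Hz0.
 set (Z := Cnorm z0). assert (HZ : (0 < Z)%R) by (apply Cnorm_pos; auto).
 destruct (Hc (3*eps*Z)%R) as [d [Hd Hcd]]. { apply Rmult_lt_0_compat; lra. }
 exists (Rmin d (Z/2)). split. { apply Rmin_pos; lra. }
 intros u v z Hz HE Hzz Hnear. unfold near in Hnear.
 set (x := chart_pt alpha z u v c) in *.
 destruct Hnear as [Hok [H1 H2]].
 assert (A1 := Rmin_l d (Z/2)). assert (A2 := Rmin_r d (Z/2)).
 rewrite rfun_eq by auto. rewrite (Hid z u v _ _ (surjective_pairing _) Hok HE).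
 change (fst (X0, Y0)) with X0 in H1. change (snd (X0, Y0)) with Y0 in H2.
 fold x. assert (B := Hcd (fst (cp x)) (snd (cp x)) ltac:(lra) ltac:(lra)). rewrite H0 in B.
 set (g := P (fst (cp x)) (snd (cp x)) / Q (fst (cp x)) (snd (cp x))) in *.
 replace (g - C0) with g in B by ring.
 unfold Cdiv at 1. rewrite Cnorm_mul.
 assert (Hw : C2 * (C2 + C1) * z <> C0) by (apply mul_nz; auto; apply C6nz).
 rewrite Cnorm_inv by auto. rewrite Cnorm_mul, Cnorm_C6.
 assert (T := Cnorm_sub_tri z0 z). fold Z in T. rewrite Cnorm_sub_sym in T.
 assert (Hzz2 : (Z/2 < Cnorm z)%R) by lra.
 assert (0 <= Cnorm g)%R by apply Cnorm_ge0.
 apply (Rmult_lt_reg_r (6 * Cnorm z)%R). lra.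
 match goal with |- (?a * / ?b * ?b < _)%R => replace (a * / b * b)%R with a by (field; lra) end.
 assert (0 < eps * Z)%R by nra. nra. Qed.

Lemma part2_gen alpha c (P Q : Cplx -> Cplx -> Cplx) X0 Y0 Bd :
 (forall z u v X Y, cp (chart_pt alpha z u v c) = (X,Y) -> cok (chart_pt alpha z u v c) ->
    Eng u v <> C0 -> Nf alpha u v / Eng u v = P X Y / Q X Y) ->
 cont (fun X Y => P X Y / Q X Y) X0 Y0 -> (Cnorm (P X0 Y0 / Q X0 Y0) <= Bd)%R ->
 exists delta, (0<delta)%R /\ forall u v z, z<>C0 -> Eng u v <> C0 ->
   near alpha c (X0,Y0) delta u v z -> (Cnorm (qfun alpha z u v) <= Bd + 2)%R.
Proof. intros Hid Hc HB.
 destruct (Hc 1%R) as [d [Hd Hcd]]. lra.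
 exists d. split; auto.
 intros u v z Hz HE Hnear. unfold near in Hnear.
 set (x := chart_pt alpha z u v c) in *.
 destruct Hnear as [Hok [H1 H2]].
 rewrite qfun_eq by auto. rewrite (Hid z u v _ _ (surjective_pairing _) Hok HE).
 change (fst (X0, Y0)) with X0 in H1. change (snd (X0, Y0)) with Y0 in H2.
 fold x. assert (B := Hcd _ _ H1 H2).
 set (g := P (fst (cp x)) (snd (cp x)) / Q (fst (cp x)) (snd (cp x))) in *.
 set (g0 := P X0 Y0 / Q X0 Y0) in *.
 assert (T := Cnorm_sub_tri g g0).
 unfold Csub at 1. eapply Rle_trans. apply Cnorm_add. rewrite Cnorm_opp.
 replace (Cnorm C1) with 1%R by (unfold C1; rewrite Cnorm_RC; symmetry; apply Rabs_R1).
 unfold Cdiv at 1. rewrite Cnorm_mul, Cnorm_inv by apply C8nz. rewrite Cnorm_C8.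
 assert (0 <= Cnorm g)%R by apply Cnorm_ge0. lra. Qed.

Lemma compact_bounded K : Ccompact K -> exists B, (0 <= B)%R /\ forall w, K w -> (Cnorm w <= B)%R.
Proof. intro HK.
 destruct (HK nat (fun n x => (Cnorm x < INR n)%R)) as [l Hl].
 - intros n x Hx. exists (INR n - Cnorm x)%R. split; [lra|]. intros y Hy.
   assert (T := Cnorm_sub_tri y x). lra.
 - intros x _. destruct (INR_archimed 1 (Cnorm x)) as [n Hn]; [lra|]. exists n. lra.
 - exists (List.fold_right (fun n acc => Rmax (INR n) acc) 0%R l). split.
   + clear Hl. induction l; simpl; [lra|]. eapply Rle_trans; [apply IHl|apply Rmax_r].
   + intros w Hw. destruct (Hl w Hw) as [n [Hin Hn]]. clear Hl Hw.
     induction l as [|a l IH]; simpl in *; [contradiction|].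
     destruct Hin as [->|Hin]. eapply Rle_trans; [|apply Rmax_l]; lra.
     eapply Rle_trans; [apply IH; auto|apply Rmax_r].
Qed.

Ltac p1case G P Q := eapply (part1_gen _ _ P Q); [intros ? ? ? ? ? ?Hc ?Hk ?He; eapply G; eauto | | | auto | auto].
Ltac valz := match goal with |- ?a / ?b = C0 => replace a with C0 by (unfold P01, P71, P11, P21, P22, P31, P32, P41, P42, Kf, A31, A32, A41, A42; ring); apply div0 end.
Ltac contu := unfold P01, Q01, P71, Q71, P11, Q11, P21, Q21, P22, Q22, P31, Q31, A31, P32, Q32, A32, P41, Q41, A41, P42, Q42, A42, Kf; contt.
Ltac nzc K := match goal with |- ?q <> C0 => replace q with K by (field; cside) end.

Theorem lemma1 (alpha : Cplx) :
  (* (1) for every eps > 0 there is a neighbourhood U of I_3 in the bundle S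
     (a union of chart balls around the points of I_3 x (Cplx \ {0}))
     on which |r| < eps, for all z <> 0 *)
  (forall eps : R, (0 < eps)%R ->
     forall (c : chart) (p : pt) (z0 : Cplx), on_I3 c p -> z0 <> C0 ->
     exists delta : R, (0 < delta)%R /\
       forall u v z : Cplx, z <> C0 -> Eng u v <> C0 ->
         (Cnorm (z - z0)%Cplx < delta)%R ->
         near alpha c p delta u v z ->
         (Cnorm (rfun alpha z u v) < eps)%R)
  /\
  (* (2) for every compact K in (L_4^(5) \ L_5^(4)) u (L_7^(2) \ L_8^(1))
     (written as K4 u K7 via the global coordinates of the two disjoint curves)
     there are a neighbourhood V of K in S_9 and Cplx > 0 with |3 z E'/(4E)| <= Cplx
     on V for all z <> 0 *)
  (forall K4 K7 : Cplx -> Prop, Ccompact K4 -> Ccompact K7 ->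
     exists Cb : R, (0 < Cb)%R /\
       forall (c : chart) (p : pt),
         ((exists w, K4 w /\ L4pt w c p) \/ (exists m, K7 m /\ L7pt m c p)) ->
         exists delta : R, (0 < delta)%R /\
           forall u v z : Cplx, z <> C0 -> Eng u v <> C0 ->
             near alpha c p delta u v z ->
             (Cnorm (qfun alpha z u v) <= Cb)%R).
Proof. split.
- intros eps Heps c p z0 HI Hz0. destruct p as [X0 Y0].
  destruct HI as [[[-> [Hp1 Hp2]] | [[-> Hp] | [-> Hp]]] | [[[-> Hp] | [-> Hp]] | [[[-> [Hp1 Hp2]] | [[-> Hp]|[-> Hp]]] | [[-> [Hp1 Hp2]] | [[-> Hp] | [-> Hp]]]]]];
  simpl in *; try (injection Hp; intros; subst); try subst.
  + p1case G01 (P01 alpha) Q01; [contu; try exact C2nz; nzc (- C2 * Y0); apply mul_nz; [apply opp_nz, C2nz|auto] | valz].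
  + p1case G71 (P71 alpha) Q71; [contu; try exact C2nz; nzc (- C2); apply opp_nz, C2nz | valz].
  + p1case G22 (P22 alpha) Q22; [contu; try exact C2nz; nzc (- C2); apply opp_nz, C2nz | valz].
  + p1case G11 (P11 alpha) Q11; [contu; try exact C2nz; nzc C1; apply C1nz | valz].
  + p1case G21 (P21 alpha) Q21; [contu; try exact C2nz; nzc C1; apply C1nz | valz].
  + p1case G21 (P21 alpha) Q21; [contu; try exact C2nz; nzc (C2 * (C1/C2 - X0)); apply mul_nz; [apply C2nz|apply sub_nz; unfold half in Hp2; cnum; auto] | valz].
  + p1case G22 (P22 alpha) Q22; [contu; try exact C2nz; nzc (- C2); apply opp_nz, C2nz | valz].
  + p1case G32 (P32 alpha) Q32; [contu; try exact C2nz; nzc (- C2); apply opp_nz, C2nz | valz].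
  + p1case G31 (P31 alpha) Q31; [contu; try exact C2nz; nzc (- C2 * X0); apply mul_nz; [apply opp_nz, C2nz|auto] | valz].
  + p1case G32 (P32 alpha) Q32; [contu; try exact C2nz; nzc (- C2); apply opp_nz, C2nz | valz].
  + p1case G42 (P42 alpha) Q42; [contu; try exact C2nz; nzc (- C2); apply opp_nz, C2nz | valz].
- intros K4 K7 HK4 HK7.
  destruct (compact_bounded K4 HK4) as [B4 [HB4 HK4b]].
  destruct (compact_bounded K7 HK7) as [B7 [HB7 HK7b]].
  set (Bd := (Cnorm (C2*alpha - C1) * B4 + Cnorm (C2*(C2*alpha+C1)) * B7)%R).
  assert (HBd : (0 <= Bd)%R).
  { unfold Bd. assert (H1 := Cnorm_ge0 (C2*alpha - C1)). assert (H2 := Cnorm_ge0 (C2*(C2*alpha+C1))). nra. }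
  exists (Bd + 2)%R. split; [lra|].
  intros c p [[w [Kw Hw]] | [m [Km Hm]]].
  + destruct Hw as [[Hw0 [-> ->]] | [-> [-> ->]]].
    * eapply (part2_gen _ ch41 (P41 alpha) Q41 _ _ Bd).
      -- intros ? ? ? ? ? ?Hc ?Hk ?He; eapply G41; eauto.
      -- contu; try exact C2nz. cnum2. nzc (- C2 * Cinv w). apply mul_nz; [apply opp_nz, C2nz|apply inv_nz; auto].
      -- replace (P41 alpha (RC (-1 / 4) + RC 1 / w) C0 / Q41 (RC (-1 / 4) + RC 1 / w) C0)
           with ((C2*alpha - C1) * (- w * Cinv C2))
           by (unfold P41, Q41, A41, Kf; cnum2; field; cside).
         rewrite !Cnorm_mul, Cnorm_opp, Cnorm_inv, Cnorm_C2 by exact C2nz.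
         assert (Hw := HK4b w Kw). assert (H1 := Cnorm_ge0 (C2*alpha - C1)).
         assert (H2 := Cnorm_ge0 (C2*(C2*alpha+C1))). assert (H3 := Cnorm_ge0 w). unfold Bd. nra.
    * eapply (part2_gen _ ch42 (P42 alpha) Q42 _ _ Bd).
      -- intros ? ? ? ? ? ?Hc ?Hk ?He; eapply G42; eauto.
      -- contu; try exact C2nz. nzc (- C2). apply opp_nz, C2nz.
      -- replace (P42 alpha C0 C0 / Q42 C0 C0) with C0 by (symmetry; valz).
         rewrite Cnorm_C0. auto.
  + destruct Hm as [-> ->].
    eapply (part2_gen _ ch71 (P71 alpha) Q71 _ _ Bd).
    -- intros ? ? ? ? ? ?Hc ?Hk ?He; eapply G71; eauto.
    -- contu; try exact C2nz. nzc (- C2). apply opp_nz, C2nz.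
    -- replace (P71 alpha m C0 / Q71 m C0) with (C2*(C2*alpha+C1) * m)
           by (unfold P71, Q71; field; cside).
       rewrite Cnorm_mul.
       assert (Hw := HK7b m Km). assert (H1 := Cnorm_ge0 (C2*alpha - C1)).
       assert (H2 := Cnorm_ge0 (C2*(C2*alpha+C1))). assert (H3 := Cnorm_ge0 m). unfold Bd. nra.
Qed.
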